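(* Let $k\ge n\ge 3$, and let $\pi$ assign to each $n$-element subset $S\subseteq[k]$ a string $\pi(S)$ of length $n$ that is an ordering of the elements of $S$, such that $d(\pi(S),\pi(S'))\le 3$ for all $n$-element subsets $S,S'\subseteq[k]$ with $|S\oplus S'|=2$. Then every set $R\subseteq[k]$ with $|R|=n-1$ satisfies at least one of: (1) there exists $A_R\subseteq R$ with $|A_R|=n-3$ such that $R$ freezes $A_R$; or (2) $R$ is semi-frozen.
   Context: $[k]=\{1,\dots,k\}$; $d$ is Hamming distance; $\pi(S)[i]$ is the letter at position $i\in[n]$ of $\pi(S)$; $\oplus$ is symmetric difference of sets. For a set $R\subseteq[k]$, $\mathcal U_R$ is the set of all sets $S\subseteq[k]$ with $R\subset S$ and $|S|=|R|+1$. For $|R|=n-1$ and $A_R\subseteq R$, $R$ freezes $A_R$ (with freezing function $g_R$) if there is a one-to-one map $g_R:A_R\to[n]$ such that $\pi(S)[g_R(a)]=a$ for all $a\in A_R$ and all $S\in\mathcal U_R$. A set $R$ with $|R|=n-1$ is semi-frozen with semi-freezing function $h_R$ and wildcard index $w_R$ if $h_R:R\to[n]$ is one-to-one, $w_R$ is the unique index of $[n]$ not in the image of $h_R$, and for every $r\in R$ and every $S\in\mathcal U_R$, either $\pi(S)[h_R(r)]=r$ or $\pi(S)[w_R]=r$. *)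

(* Defs.v *)
(* Letters [k] are modelled by 'I_k (0..k-1), positions [n] by 'I_n. *)
From mathcomp Require Import all_boot.
Set Implicit Arguments. Unset Strict Implicit. Unset Printing Implicit Defensive.

Definition hamming (n k : nat) (u v : 'I_n -> 'I_k) : nat :=
  #|[set i : 'I_n | u i != v i]|.

Definition symdiff_card (k : nat) (S S' : {set 'I_k}) : nat :=
  #|(S :\: S') :|: (S' :\: S)|.

Definition is_ordering (n k : nat) (S : {set 'I_k}) (s : 'I_n -> 'I_k) : Prop :=
  injective s /\ [set s i | i : 'I_n] = S.

Definition inU (k : nat) (R S : {set 'I_k}) : Prop :=
  R \proper S /\ #|S| = #|R|.+1.

Definition freezes (n k : nat) (pi : {set 'I_k} -> 'I_n -> 'I_k)
    (R A : {set 'I_k}) : Prop :=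
  #|R| = n.-1 /\ A \subset R /\
  exists g : 'I_k -> 'I_n,
    {in A &, injective g} /\
    forall a, a \in A -> forall S, inU R S -> pi S (g a) = a.

Definition semi_frozen (n k : nat) (pi : {set 'I_k} -> 'I_n -> 'I_k)
    (R : {set 'I_k}) : Prop :=
  #|R| = n.-1 /\
  exists (h : 'I_k -> 'I_n) (w : 'I_n),
    {in R &, injective h} /\
    (forall j : 'I_n, j \notin [set h r | r in R] <-> j = w) /\
    forall r, r \in R -> forall S, inU R S -> pi S (h r) = r \/ pi S w = r.

(* Main.v *)
From Stdlib Require Import Classical_Prop.
Require Import Defs.
From mathcomp Require Import all_boot zify.
Set Implicit Arguments. Unset Strict Implicit. Unset Printing Implicit Defensive.

Lemma subset_card_exists (T : finType) (F : {set T}) m :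
  m <= #|F| -> exists A : {set T}, A \subset F /\ #|A| = m.
Proof.
move=> hm; exists [set x in take m (enum F)]; split.
  apply/subsetP=> x; rewrite inE => /mem_take; by rewrite mem_enum.
rewrite cardsE; have /card_uniqP -> := take_uniq m (enum_uniq (mem F)).
rewrite size_take -cardE; case: ltnP => // h; apply/eqP; rewrite eqn_leq h; exact: hm.
Qed.

Lemma h4 n k (u v : 'I_n -> 'I_k) : hamming u v <= 3 -> forall a b c d,
  a != b -> a != c -> a != d -> b != c -> b != d -> c != d ->
  u a != v a -> u b != v b -> u c != v c -> u d != v d -> False.
Proof.
rewrite /hamming => h a b c d ab ac ad bc bd cd ua ub uc ud.
have sub : a |: (b |: (c |: [set d])) \subset [set i | u i != v i].
  apply/subsetP=> x; rewrite !inE; do 3 (case: eqP => [->|_] //=); by move/eqP->.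
have := subset_leq_card sub.
rewrite !cardsU1 cards1 !inE (negbTE cd) (negbTE bc) (negbTE bd)
  (negbTE ab) (negbTE ac) (negbTE ad) /=.
by move=> /leq_trans/(_ h).
Qed.
Section Fam.
Variables (n k : nat) (pi : {set 'I_k} -> 'I_n -> 'I_k) (R : {set 'I_k}).
Hypothesis hn : 3 <= n.
Hypothesis hord : forall S : {set 'I_k}, #|S| = n -> is_ordering S (pi S).
Hypothesis hd : forall S S' : {set 'I_k}, #|S| = n -> #|S'| = n -> symdiff_card S S' = 2 ->
  hamming (pi S) (pi S') <= 3.
Hypothesis hR : #|R| = n - 1.
Implicit Types S T : {set 'I_k}.
Implicit Types i j q : 'I_n.

Definition memb S := (R \proper S) && (#|S| == #|R|.+1).
Lemma memP S : inU R S <-> memb S.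
Proof. rewrite /inU /memb; split => [[h1 h2]|/andP[h1 /eqP h2]] //; by rewrite h1 h2 eqxx. Qed.

Lemma mem_card S : memb S -> #|S| = n.
Proof. case/andP => _ /eqP ->; rewrite hR; lia. Qed.
Lemma L_inj S : memb S -> injective (pi S).
Proof. by move/mem_card/hord => []. Qed.
Lemma L_img S : memb S -> forall x, x \in S -> exists i, pi S i = x.
Proof.
move=> hS x xS; have [_ e] := hord (mem_card hS).
have : x \in [set pi S i | i : 'I_n] by rewrite e.
by case/imsetP => i _ ->; exists i.
Qed.
Lemma L_in S i : memb S -> pi S i \in S.
Proof. move=> hS; have [_ e] := hord (mem_card hS); have : pi S i \in [set pi S i | i : 'I_n] by exact: imset_f.
by rewrite e. Qed.
Lemma L_RS S : memb S -> R \subset S.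
Proof. by case/andP => /properP []. Qed.
Lemma L_imgR S r : memb S -> r \in R -> exists i, pi S i = r.
Proof. move=> hS hr; apply: L_img => //; exact: (subsetP (L_RS hS)). Qed.
Lemma L_eqS S y : memb S -> y \in S -> y \notin R -> S = y |: R.
Proof.
move=> hS yS yR; apply/eqP; rewrite eq_sym eqEcard; apply/andP; split.
  by rewrite subUset sub1set yS L_RS.
rewrite cardsU1 yR; case/andP: hS => _ /eqP ->; by [].
Qed.
Lemma L_hole S : memb S -> exists q, pi S q \notin R.
Proof.
move=> hS; case/andP: (hS) => /properP [_ [y yS yR]] _.
by have [i e] := L_img hS yS; exists i; rewrite e.
Qed.
Lemma L_holeU S q i : memb S -> pi S q \notin R -> pi S i \notin R -> i = q.
Proof.
move=> hS hq hi; apply: (L_inj hS).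
have : pi S i \in pi S q |: R by rewrite -(L_eqS hS (L_in q hS) hq); exact: L_in.
rewrite !inE (negbTE hi) orbF.
by move/eqP.
Qed.
Lemma L_inR S q i : memb S -> pi S q \notin R -> i != q -> pi S i \in R.
Proof. by move=> hS hq; apply: contraNT => /(L_holeU hS hq) ->. Qed.
Lemma L_new S T q i : memb S -> memb T -> S != T -> pi S q \notin R -> pi T i != pi S q.
Proof.
move=> hS hT ST hq; apply/eqP => e; move/negP: ST; apply; apply/eqP.
have hi : pi T i \notin R by rewrite e.
rewrite (L_eqS hS (L_in q hS) hq) (L_eqS hT (L_in i hT) hi) e //.
Qed.
Lemma L_dist S T : memb S -> memb T -> S != T -> hamming (pi S) (pi T) <= 3.
Proof.
move=> hS hT ST; apply: hd; rewrite ?mem_card //.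
have [q hq] := L_hole hS; have [q' hq'] := L_hole hT.
set x := pi S q in hq; set y := pi T q' in hq'.
have ES := L_eqS hS (L_in q hS) hq; have ET := L_eqS hT (L_in q' hT) hq'.
have xy : x != y by apply: contraNneq ST => e; rewrite ES ET -/x -/y e.
rewrite /symdiff_card -/x -/y ES ET.
have -> : (x |: R) :\: (y |: R) :|: ((y |: R) :\: (x |: R)) = [set x; y].
  apply/setP => z; rewrite !inE.
  have [zx|zx] := eqVneq z x; have [zy|zy] := eqVneq z y.
  - by exfalso; move/eqP: xy; congruence.
  - by rewrite zx (negbTE hq).
  - by rewrite zy (negbTE hq').
  - by case: (z \in R).
by rewrite cards2 xy.
Qed.

Lemma G1 B T qB qT : memb B -> memb T -> pi B qB \notin R -> pi T qT \notin R -> qT != qB ->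
  exists y, [/\ y != qB, pi T qB = pi B y,
    (forall i, i != qB -> i != qT -> i != y -> pi T i = pi B i) &
    (y != qT -> pi T y = pi B qT)].
Proof.
move=> hB hT hqB hqT nq.
have nq' : qB != qT by rewrite eq_sym.
have iB := L_inj hB; have iT := L_inj hT.
have BT : B != T.
  apply/eqP => e; subst B; move/eqP: nq; apply; symmetry; exact: L_holeU hT hqT hqB.
have TB : T != B by rewrite eq_sym.
have hh := L_dist hB hT BT.
have [y ey] := L_imgR hB (L_inR hT hqT nq').
have yqB : y != qB by apply: contraNneq hqB => e; rewrite -e ey (L_inR hT hqT nq').
have dB : pi B qB != pi T qB by rewrite eq_sym (L_new qB hB hT BT hqB).
have dT : pi B qT != pi T qT by exact: L_new qT hT hB TB hqT.
have agree : forall i, i != qB -> i != qT -> i != y -> pi T i = pi B i.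
  move=> i i1 i2 i3; have [//|di'] := eqVneq (pi T i) (pi B i); exfalso.
  have di : pi B i != pi T i by rewrite eq_sym.
  have [yT|yT] := eqVneq y qT.
  - have [j ej] := L_imgR hB (L_inR hT hqT i2).
    have j1 : j != qB by apply: contraNneq hqB => e; rewrite -e ej (L_inR hT hqT i2).
    have j2 : j != i by apply/eqP => e; subst j; rewrite ej eqxx in di.
    have j3 : j != qT.
      apply: contraNneq i1 => e; apply/eqP; apply: iT; rewrite -ej e -yT ey //.
    have dj : pi B j != pi T j.
      apply/eqP => e; move/eqP: j2; apply; apply: iT; by rewrite -e ej.
    apply: (h4 hh (a:=qB) (b:=qT) (c:=i) (d:=j)) => //; by rewrite eq_sym.
  - have dy : pi B y != pi T y.
      rewrite ey; apply/eqP => e; move/eqP: yqB; apply; apply: iT; by rewrite e.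
    apply: (h4 hh (a:=qB) (b:=qT) (c:=y) (d:=i)) => //; by rewrite eq_sym.
exists y; split => // yT.
have [l el] := L_imgR hB (L_inR hT hqT yT).
have [lT|lT] := eqVneq l qT; first by rewrite -el lT.
have l1 : l != qB by apply: contraNneq hqB => e; rewrite -e el (L_inR hT hqT yT).
have l2 : l != y.
  apply/eqP => e; subst l; move/eqP: yqB; apply; apply: iT; by rewrite -el ey.
have := agree l l1 lT l2; rewrite el => /iT e; by rewrite e eqxx in l2.
Qed.

Lemma G2 S T q j : memb S -> memb T -> S != T -> pi S q \notin R -> pi T q \notin R -> j != q ->
  pi T j = pi S j \/ exists r2, [/\ r2 != j, r2 != q, pi T j = pi S r2, pi T r2 = pi S j &
    forall i, i != q -> i != j -> i != r2 -> pi T i = pi S i].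
Proof.
move=> hS hT ST hqS hqT jq.
have iS := L_inj hS; have iT := L_inj hT.
have hh := L_dist hS hT ST.
have [|dj'] := eqVneq (pi T j) (pi S j); first by left.
right.
have dj : pi S j != pi T j by rewrite eq_sym.
have [r2 er] := L_imgR hS (L_inR hT hqT jq).
have r1 : r2 != q by apply: contraNneq hqS => e; rewrite -e er (L_inR hT hqT jq).
have r2j : r2 != j by apply/eqP => e; subst r2; rewrite er eqxx in dj'.
have dr : pi S r2 != pi T r2.
  apply/eqP => e; move/eqP: r2j; apply; apply: iT; by rewrite -e er.
have dq : pi S q != pi T q by rewrite eq_sym (L_new q hS hT ST hqS).
have agree : forall i, i != q -> i != j -> i != r2 -> pi T i = pi S i.
  move=> i i1 i2 i3; have [//|di'] := eqVneq (pi T i) (pi S i); exfalso.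
  have di : pi S i != pi T i by rewrite eq_sym.
  apply: (h4 hh (a:=q) (b:=j) (c:=r2) (d:=i)) => //; by rewrite eq_sym.
exists r2; split => //.
have [l el] := L_imgR hS (L_inR hT hqT r1).
have [lj|lj] := eqVneq l j; first by rewrite -el lj.
have l1 : l != q by apply: contraNneq hqS => e; rewrite -e el (L_inR hT hqT r1).
have l2 : l != r2 by apply/eqP => e; subst l; rewrite el eqxx in dr.
have := agree l l1 lj l2; rewrite el => /iT e; by rewrite e eqxx in l2.
Qed.

Definition fixedP c := exists i, forall S, memb S -> pi S i = c.
Hypothesis H3 : forall u v : 'I_k, exists c, [/\ c \in R, ~ fixedP c, c != u & c != v].

Lemma LX S S' q : memb S -> memb S' -> pi S q \notin R -> pi S' q \notin R ->
  forall i, i != q -> pi S' i = pi S i.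
Proof.
move=> hS hS' hq hq' p pq.
have [//|dp'] := eqVneq (pi S' p) (pi S p); exfalso.
have iS := L_inj hS; have iS' := L_inj hS'.
have SS' : S != S' by apply/eqP => e; subst S'; rewrite eqxx in dp'.
have S'S : S' != S by rewrite eq_sym.
case: (G2 hS hS' SS' hq hq' pq) => [e|[r [rp rq e1 e2 ag]]]; first by rewrite e eqxx in dp'.
have pr : p != r by rewrite eq_sym.
have [c [cR nfc cu cv]] := H3 (pi S p) (pi S r).
apply: nfc; have [j ej] := L_imgR hS cR; exists j => T hT.
have iT := L_inj hT.
have jq : j != q by apply: contraNneq hq => e; rewrite -e ej.
have jp : j != p by apply: contraNneq cu => e; rewrite -ej e.
have jr : j != r by apply: contraNneq cv => e; rewrite -ej e.
have Sj : pi S' j = pi S j by apply: ag.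
have dSp : pi S' p != pi S p by rewrite e1 (inj_eq iS) eq_sym.
have dSr : pi S' r != pi S r by rewrite e2 (inj_eq iS).
have [qT hqT] := L_hole hT.
have [eqT|nqT] := eqVneq qT q.
  subst qT.
  have [<-|ST] := eqVneq S T; first by [].
  have [<-|S'T] := eqVneq S' T; first by rewrite Sj.
  case: (G2 hS hT ST hq hqT jq) => [->//|[r2 [r2j r2q e3 e4 ag2]]].
  exfalso.
  have TS' : T != S' by rewrite eq_sym.
  have hh := L_dist hT hS' TS'.
  have dq : pi T q != pi S' q by exact: L_new q hS' hT S'T hq'.
  have dj : pi T j != pi S' j by rewrite e3 Sj (inj_eq iS).
  have dr2 : pi T r2 != pi S' r2.
    rewrite e4; have [r2p|r2p] := eqVneq r2 p; first by rewrite r2p e1 (inj_eq iS).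
    have [r2r|r2r] := eqVneq r2 r; first by rewrite r2r e2 (inj_eq iS).
    by rewrite ag // (inj_eq iS) eq_sym.
  have qj : q != j by rewrite eq_sym.
  have qp : q != p by rewrite eq_sym.
  have qr : q != r by rewrite eq_sym.
  have rj : r != j by rewrite eq_sym.
  have pj : p != j by rewrite eq_sym.
  have qr2 : q != r2 by rewrite eq_sym.
  have jr2 : j != r2 by rewrite eq_sym.
  have [r2p|r2p] := eqVneq r2 p.
  - subst r2.
    have dm : pi T r != pi S' r by rewrite (ag2 r rq rj rp) eq_sym.
    by apply: (h4 hh (a:=q) (b:=j) (c:=p) (d:=r)).
  - have pr2 : p != r2 by rewrite eq_sym.
    have dm : pi T p != pi S' p by rewrite (ag2 p pq pj pr2) eq_sym.
    by apply: (h4 hh (a:=q) (b:=j) (c:=r2) (d:=p)).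
have [y [yq ey agT ey2]] := G1 hS hT hq hqT nqT.
have [y' [yq' ey' agT' ey2']] := G1 hS' hT hq' hqT nqT.
have inD : forall m, m != q -> pi S' m != pi S m -> (m == qT) || (m == y) || (m == y').
  move=> m mq dm; apply/negPn/negP; rewrite !negb_or => /andP[/andP[m1 m2] m3].
  by move: dm; rewrite -(agT m mq m1 m2) -(agT' m mq m1 m3) eqxx.
have yy : y != y'.
  apply/eqP => e; subst y'.
  have yp : p != y by apply/eqP => e; subst y; move: dSp; rewrite -ey -ey' eqxx.
  have yr : r != y by apply/eqP => e; subst y; move: dSr; rewrite -ey -ey' eqxx.
  have := inD p pq dSp; rewrite (negbTE yp) !orbF => /eqP pT.
  have := inD r rq dSr; rewrite (negbTE yr) !orbF => /eqP rT.
  by rewrite pT rT eqxx in rp.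
have ypr : (y == p) || (y == r).
  apply/negPn/negP; rewrite negb_or => /andP[yp yr]; move/eqP: yy; apply; apply: iS'.
  by rewrite -ey' ag // -ey.
have jy : j != y by case/orP: ypr => /eqP ->.
have [jT|jT] := eqVneq j qT; last by rewrite (agT j jq jT jy) ej.
exfalso; subst qT.
have [l el] := L_imgR hT cR.
have lj : l != j by apply: contraNneq hqT => e; by rewrite -e el.
have [lq|lq] := eqVneq l q.
  subst l; move: el; rewrite ey -ej => /iS e; subst y.
  by move: ypr; rewrite (negbTE jp) (negbTE jr).
have [ly|ly] := eqVneq l y.
  have yj : y != j by rewrite eq_sym.
  subst l; move: el; rewrite (agT' y yq yj yy).
  case/orP: ypr => /eqP e; subst y; [rewrite e1|rewrite e2]; rewrite -ej => /iS e;
    [by rewrite e eqxx in jr | by rewrite e eqxx in jp].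
move: el; rewrite (agT l lq lj ly) -ej => /iS e; by rewrite e eqxx in lj.
Qed.

Variables (S0 : {set 'I_k}) (q0 : 'I_n).
Hypotheses (hS0 : memb S0) (hq0 : pi S0 q0 \notin R).

Definition G1d S p y := [/\ y != q0, pi S q0 = pi S0 y,
  (forall i, i != q0 -> i != p -> i != y -> pi S i = pi S0 i) & (y != p -> pi S y = pi S0 p)].

Lemma P0 S S' p p' y y' : memb S -> memb S' -> pi S p \notin R -> pi S' p' \notin R ->
  p != q0 -> p' != q0 -> G1d S p y -> G1d S' p' y' -> y != p -> y' != y -> y = p'.
Proof.
move=> hS hS' hp hp' pq p'q [yq ey ag ey2] [yq' ey' ag' ey2'] yp yy.
have i0 := L_inj hS0.
have [pp|pp] := eqVneq p p'.
  subst p'; exfalso; have qp : q0 != p by rewrite eq_sym.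
  have := LX hS hS' hp hp' qp; rewrite ey ey' => /i0 e; by rewrite e eqxx in yy.
have SS' : S != S' by apply/eqP => e; subst S'; move/eqP: pp; apply; exact: L_holeU hS hp' hp.
have S'S : S' != S by rewrite eq_sym.
have hh := L_dist hS hS' SS'.
have dq : pi S q0 != pi S' q0 by rewrite ey ey' (inj_eq i0) eq_sym.
have dp : pi S p != pi S' p by rewrite eq_sym (L_new p hS hS' SS' hp).
have dp' : pi S p' != pi S' p' by exact: (L_new p' hS' hS S'S hp').
apply/eqP; apply: contraT => yp'.
have yy2 : y != y' by rewrite eq_sym.
have dy : pi S y != pi S' y by rewrite (ey2 yp) (ag' y yq yp' yy2) (inj_eq i0) eq_sym.
have qp : q0 != p by rewrite eq_sym.
have qp' : q0 != p' by rewrite eq_sym.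
have qy : q0 != y by rewrite eq_sym.
have py : p != y by rewrite eq_sym.
have p'y : p' != y by rewrite eq_sym.
exfalso; exact: (h4 hh (a:=q0) (b:=p) (c:=p') (d:=y)).
Qed.

Definition Good w S q := (forall i, i != w -> i != q -> i != q0 -> pi S i = pi S0 i) /\
  (q0 != w -> q0 != q -> pi S q0 = pi S0 w).

Lemma good_exists : exists w, forall S q, memb S -> pi S q \notin R -> Good w S q.
Proof.
have i0 := L_inj hS0.
have hole0 : forall S q, memb S -> pi S q \notin R -> q = q0 -> Good q0 S q.
  move=> S q hS hq e; subst q; split; last by rewrite eqxx.
  move=> i _ _ iq; have := LX hS0 hS hq0 hq iq; exact.
have G1' : forall S q, memb S -> pi S q \notin R -> q != q0 -> exists y, G1d S q y.
  move=> S q hS hq qq; have [y [a b c d]] := G1 hS0 hS hq0 hq qq; by exists y; split.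
case: (classic (exists S1 p1 y1, [/\ memb S1, pi S1 p1 \notin R, p1 != q0, G1d S1 p1 y1 & y1 != p1])).
- move=> [S1 [p1 [y1 [hS1 hp1 p1q g1 yp1]]]].
  exists y1 => S q hS hq.
  have [qq|qq] := eqVneq q q0.
    subst q; split; last by rewrite eqxx.
    move=> i _ _ iq; have := LX hS0 hS hq0 hq iq; exact.
  have [y g] := G1' S q hS hq qq.
  have [yy|yy] := eqVneq y y1.
    subst y; case: g => yq ey ag ey2; split; first by move=> i a b c; apply: ag.
    by move=> _ _.
  exfalso.
  have y1q : y1 = q by apply: (P0 hS1 hS hp1 hq p1q qq g1 g yp1 yy).
  have yq : y != q by rewrite -y1q.
  have yp : y = p1 by apply: (P0 hS hS1 hq hp1 qq p1q g g1 yq); rewrite eq_sym.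
  subst q y.
  have [c [cR nfc cu cv]] := H3 (pi S0 p1) (pi S0 y1).
  apply: nfc; have [j ej] := L_imgR hS0 cR; exists j => T hT.
  have jq : j != q0 by apply: contraNneq hq0 => e; rewrite -e ej.
  have jp : j != p1 by apply: contraNneq cu => e; rewrite -ej e.
  have jy : j != y1 by apply: contraNneq cv => e; rewrite -ej e.
  have [t ht] := L_hole hT.
  have [tq|tq] := eqVneq t q0.
    subst t; by rewrite (LX hS0 hT hq0 ht jq).
  have [yT gT] := G1' T t hT ht tq.
  have inP : ((t == p1) || (t == y1)) /\ ((yT == p1) || (yT == y1)).
    have [e1|n1] := eqVneq yT y1.
      have [e2|n2] := eqVneq yT p1; first by exfalso; move/eqP: yp1; congruence.
      have : p1 = t by apply: (P0 hS hT hq ht qq tq g gT yq n2).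
      by move=> <-; rewrite eqxx /= ?orbT.
    have e := P0 hS1 hT hp1 ht p1q tq g1 gT yp1 n1.
    subst t.
    have tyT : yT != y1 by [].
    have ty2 : y1 != yT by rewrite eq_sym.
    rewrite (P0 hT hS1 ht hp1 tq p1q gT g1 tyT ty2).
    by rewrite !eqxx !orbT.
  case: inP => ht1 ht2.
  have jt : j != t by case/orP: ht1 => /eqP ->.
  have jyT : j != yT by case/orP: ht2 => /eqP ->.
  case: gT => _ _ agT _; by rewrite agT.
- move=> hno; exists q0 => S q hS hq.
  have [qq|qq] := eqVneq q q0; first exact: hole0.
  have [y g] := G1' S q hS hq qq.
  have [yq|yq] := eqVneq y q; last first.
    by exfalso; apply: hno; exists S, q, y; split.
  subst y; case: g => _ _ ag _; split; last by rewrite eqxx.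
  move=> i _ a b; exact: ag.
Qed.

Definition pos0 r := odflt q0 [pick i | pi S0 i == r].
Lemma pos0P r : r \in R -> pi S0 (pos0 r) = r.
Proof.
move=> hr; rewrite /pos0; case: pickP => [i /eqP //|H].
have [i e] := L_imgR hS0 hr; by have := H i; rewrite e eqxx.
Qed.

Lemma freeze_case (A : {set 'I_k}) : A \subset R -> (forall a, a \in A -> fixedP a) -> freezes pi R A.
Proof.
move=> AR hA; split; first by rewrite hR subn1.
split => //; exists pos0; split.
  move=> a b ha hb e; by rewrite -(pos0P (subsetP AR a ha)) e (pos0P (subsetP AR b hb)).
move=> a ha S /memP hS; have [i hi] := hA a ha.
have e : pos0 a = i.
  apply: (L_inj hS0); by rewrite hi // (pos0P (subsetP AR a ha)).
by rewrite e hi.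
Qed.

Lemma semi_from_good w : (forall S q, memb S -> pi S q \notin R -> Good w S q) ->
  semi_frozen pi R.
Proof.
move=> hG; split; first by rewrite hR subn1.
have i0 := L_inj hS0.
pose h r := if r == pi S0 w then q0 else pos0 r.
have hq0R : forall r, r \in R -> pos0 r != q0.
  move=> r hr; apply: contraNneq hq0 => e; by rewrite -e pos0P.
exists h, w; split; [|split].
- move=> r r' hr hr'; rewrite /h.
  case: (eqVneq r (pi S0 w)) => [->|rw]; case: (eqVneq r' (pi S0 w)) => [->|rw'] //.
  + by move=> e; move: (hq0R r' hr'); rewrite e eqxx.
  + by move=> e; move: (hq0R r hr); rewrite e eqxx.
  + by move=> e; rewrite -(pos0P hr) e pos0P.
- move=> j; split.
  + move=> nj; apply/eqP; apply: contraNT nj => jw; apply/imsetP.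
    have [jq|jq] := eqVneq j q0.
      have wq : w != q0 by rewrite -jq eq_sym.
      exists (pi S0 w); first exact: L_inR hS0 hq0 wq.
      by rewrite /h eqxx.
    exists (pi S0 j); first exact: L_inR hS0 hq0 jq.
    rewrite /h (inj_eq i0) (negbTE jw); apply: i0; by rewrite pos0P // (L_inR hS0 hq0 jq).
  + move=> ->; apply/imsetP => [[r hr]]; rewrite /h.
    case: eqVneq => [e|rw].
      by move=> wq; move: hr; rewrite e wq (negbTE hq0).
    by move=> e; move: rw; rewrite e pos0P // eqxx.
- move=> r hr S /memP hS.
  have [q hq] := L_hole hS; have iS := L_inj hS.
  have [ag eq2] := hG S q hS hq.
  have [l el] := L_imgR hS hr.
  have lq : l != q by apply: contraNneq hq => e; by rewrite -e el.
  rewrite /h; case: eqVneq => [rw|rw].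
    have wq : w != q0 by apply: contraNneq hq0 => e; by rewrite -e -rw.
    have [qq|qq] := eqVneq q0 q.
      right; have [lw|lw] := eqVneq l w; first by rewrite -lw.
      have lq0 : l != q0 by rewrite qq.
      by move: el; rewrite (ag l lw lq lq0) rw => /i0 e; rewrite e eqxx in lw.
    by left; rewrite eq2 // eq_sym.
  have pq : pos0 r != q0 := hq0R r hr.
  have pw : pos0 r != w by apply: contraNneq rw => e; by rewrite -e pos0P.
  have [pq'|pq'] := eqVneq (pos0 r) q; last by left; rewrite ag // pos0P.
  right; have [lw|lw] := eqVneq l w; first by rewrite -lw.
  have [lq0|lq0] := eqVneq l q0.
    subst l; have q0q : q0 != q by rewrite -pq' eq_sym.
    move: el; rewrite (eq2 lw q0q) => e; by rewrite e eqxx in rw.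
  move: el; rewrite (ag l lw lq lq0) -(pos0P hr) => /i0 e.
  by rewrite e pq' eqxx in lq.
Qed.
End Fam.

Theorem lemma3p5 (k n : nat) (pi : {set 'I_k} -> 'I_n -> 'I_k) :
  3 <= n -> n <= k ->
  (forall S : {set 'I_k}, #|S| = n -> is_ordering S (pi S)) ->
  (forall S S' : {set 'I_k}, #|S| = n -> #|S'| = n -> symdiff_card S S' = 2 ->
     hamming (pi S) (pi S') <= 3) ->
  forall R : {set 'I_k}, #|R| = n - 1 ->
    (exists A : {set 'I_k}, A \subset R /\ #|A| = n - 3 /\ freezes pi R A)
    \/ semi_frozen pi R.
Proof.
move=> hn hnk hord hd R hR.
have [x xR] : exists x, x \notin R.
  have hc := cardsC R; rewrite card_ord in hc.
  have : 0 < #|~: R| by rewrite hR in hc; lia.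
  rewrite card_gt0 => /set0Pn [x]; rewrite inE => ?; by exists x.
have hS0 : memb R (x |: R).
  rewrite /memb properEcard subsetUr cardsU1 xR /= eqxx andbT; lia.
have [q0 hq0] := L_hole hn hord hR hS0.
pose fixedb c := [exists i, [forall S, memb R S ==> (pi S i == c)]].
have fixP : forall c, fixedP pi R c -> fixedb c.
  move=> c [i hi]; apply/existsP; exists i; apply/forallP => S; apply/implyP => hS.
  by rewrite hi.
pose F := [set c in R | fixedb c].
have FR : F \subset R by apply/subsetP => c; rewrite inE => /andP[].
case: (leqP (n - 3) #|F|) => hF.
  left; have [A [AF hA]] := subset_card_exists hF.
  have AR : A \subset R := subset_trans AF FR.
  exists A; split => //; split => //.
  apply: (freeze_case hn hord hR q0 hS0 AR) => a /(subsetP AF); rewrite inE => /andP[_].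
  move=> /existsP [i /forallP hi]; exists i => S hS; exact/eqP/(implyP (hi S) hS).
right.
have H3 : forall u v : 'I_k, exists c, [/\ c \in R, ~ fixedP pi R c, c != u & c != v].
  move=> u v.
  have hN : 0 < #|(R :\: F) :\: [set u; v]|.
    rewrite cardsD (cardsDS FR).
    have : #|(R :\: F) :&: [set u; v]| <= 2.
      apply: leq_trans (subset_leq_card (subsetIr _ _)) _; by rewrite cards2; case: (u != v).
    lia.
  move: hN; rewrite card_gt0 => /set0Pn [c]; rewrite !inE negb_or => /andP[/andP[cu cv] /andP[nF cR]].
  exists c; split => //; move=> /fixP fc; by rewrite cR fc in nF.
have [w hw] := good_exists hn hord hd hR H3 hS0 hq0.
exact: (semi_from_good hn hord hR hS0 hq0 hw).
Qed.
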